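(* Let $B \in M_m\otimes M_n$ be (real) symmetric and define $X = (B + B^\Gamma)/2$. Then \[ \mu_{\min}(B) = \mu_{\min}(X) = \mu^{\mathbb{C}}_{\min}(X) \quad\text{and}\quad \mu_{\max}(B) = \mu_{\max}(X) = \mu^{\mathbb{C}}_{\max}(X). \]
   Context: $M_n$ denotes real $n\times n$ matrices and $M_m\otimes M_n$ is identified with $M_{mn}$ via the Kronecker product. For $A = \sum_j X_j \otimes Y_j \in M_m\otimes M_n$, the partial transpose is $A^\Gamma = \sum_j X_j \otimes Y_j^T$. For $B \in M_m\otimes M_n$, $\mu_{\min}(B) = \min\{(\mathbf{v}\otimes\mathbf{w})^T B(\mathbf{v}\otimes\mathbf{w}) : \mathbf{v}\in\mathbb{R}^m,\mathbf{w}\in\mathbb{R}^n, \|\mathbf{v}\|=\|\mathbf{w}\|=1\}$ and $\mu_{\max}(B)$ is the corresponding maximum; $\mu^{\mathbb{C}}_{\min}(B)$ and $\mu^{\mathbb{C}}_{\max}(B)$ are defined in the same way but with $\mathbf{v}\in\mathbb{C}^m$, $\mathbf{w}\in\mathbb{C}^n$ and $(\mathbf{v}\otimes\mathbf{w})^*B(\mathbf{v}\otimes\mathbf{w})$ in place of the real quadratic form. *)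

(* Defs.v *)
From mathcomp Require Import all_boot all_order all_algebra.
From mathcomp Require Import classical_sets reals.
From mathcomp.real_closed Require Import complex mxtens.
Set Implicit Arguments. Unset Strict Implicit. Unset Printing Implicit Defensive.
Import Order.TTheory GRing.Theory Num.Theory.
Local Open Scope ring_scope.
Local Open Scope classical_set_scope.

(* M_m (x) M_n is identified with M_{mn} via the Kronecker product [A *t B]
   of mxtens, row/column index (i,k) <-> mxtens_index (i,k). *)

(* Partial transpose: for A = sum_j X_j (x) Y_j, A^Gamma = sum_j X_j (x) Y_j^T.
   Entrywise: A^Gamma_{(i,k),(j,l)} = A_{(i,l),(j,k)}. *)
Definition ptrans {K : Type} (m n : nat) (A : 'M[K]_(m * n)) : 'M[K]_(m * n) :=
  \matrix_(a, b)
    A (mxtens_index ((mxtens_unindex a).1, (mxtens_unindex b).2))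
      (mxtens_index ((mxtens_unindex b).1, (mxtens_unindex a).2)).

Definition unit_rvec (R : realType) (m : nat) (v : 'cV[R]_m) : Prop :=
  \sum_(i < m) v i 0 ^+ 2 = 1.
Definition unit_cvec (R : realType) (m : nat) (v : 'cV[R[i]]_m) : Prop :=
  \sum_(i < m) `|v i 0| ^+ 2 = 1.

Definition prod_vals (R : realType) (m n : nat) (B : 'M[R]_(m * n)) : set R :=
  [set q | exists (v : 'cV[R]_m) (w : 'cV[R]_n),
      unit_rvec v /\ unit_rvec w /\ ((v *t w)^T *m B *m (v *t w)) 0 0 = q].

(* The values (v (x) w)^* B (v (x) w) over complex unit v, w (these are real
   for real symmetric B; we collect the real numbers q with q%:C equal to it). *)
Definition cprod_vals (R : realType) (m n : nat) (B : 'M[R]_(m * n)) : set R :=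
  [set q | exists (v : 'cV[R[i]]_m) (w : 'cV[R[i]]_n),
      unit_cvec v /\ unit_cvec w /\
      ((map_mx Num.conj (v *t w))^T *m map_mx (fun x : R => (x%:C)%C) B *m (v *t w)) 0 0
        = (q%:C)%C].

Definition mu_min (R : realType) (m n : nat) (B : 'M[R]_(m * n)) : R :=
  inf (prod_vals B).
Definition mu_max (R : realType) (m n : nat) (B : 'M[R]_(m * n)) : R :=
  sup (prod_vals B).
Definition cmu_min (R : realType) (m n : nat) (B : 'M[R]_(m * n)) : R :=
  inf (cprod_vals B).
Definition cmu_max (R : realType) (m n : nat) (B : 'M[R]_(m * n)) : R :=
  sup (cprod_vals B).

(* Main.v *)
Require Import Defs.
From mathcomp Require Import all_boot all_order all_algebra.
From mathcomp Require Import boolp classical_sets reals.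
From mathcomp.real_closed Require Import complex mxtens.
From mathcomp Require Import ring lra.
Set Implicit Arguments. Unset Strict Implicit. Unset Printing Implicit Defensive.
Import Order.TTheory GRing.Theory Num.Theory.
Local Open Scope ring_scope.

Section Gen.
Variable K : comPzRingType.

Lemma sum_idx m n (F : 'I_(m*n) -> K) :
  \sum_a F a = \sum_(e : 'I_m * 'I_n) F (@mxtens_index _ _ e).
Proof.
by apply: reindex; exists (@mxtens_unindex m n) => e _;
  rewrite (mxtens_indexK, mxtens_unindexK).
Qed.

Lemma quad_sum m n (u z : 'cV[K]_(m*n)) (X : 'M[K]_(m*n)) :
  (u^T *m X *m z) 0 0 = \sum_(p : ('I_m*'I_n)*('I_m*'I_n))
    u (@mxtens_index _ _ p.1) 0 * X (@mxtens_index _ _ p.1) (@mxtens_index _ _ p.2)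
      * z (@mxtens_index _ _ p.2) 0.
Proof.
rewrite mxE; under eq_bigr => b _ do rewrite mxE mulr_suml.
rewrite exchange_big sum_idx; under eq_bigr => a _ do rewrite sum_idx.
rewrite pair_big; apply: eq_bigr => p _; by rewrite mxE.
Qed.

Lemma kronE m n (v : 'cV[K]_m) (w : 'cV[K]_n) e :
  (v *t w) (@mxtens_index _ _ e) 0 = v e.1 0 * w e.2 0.
Proof.
by rewrite mxE mxtens_indexK [(@mxtens_unindex _ _ _).1]ord1 [(@mxtens_unindex _ _ _).2]ord1.
Qed.
End Gen.

Section Main.
Variable R : realType.

Lemma conjE (z : R[i]) : Num.conj z = (z^*)%C.
Proof.
rewrite [in LHS](Crect z) conjC_rect ?Creal_Re ?Creal_Im // -complexRe -complexIm.
by rewrite -complexiE; case: z => a b /=; simpc.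
Qed.

Lemma Re_sum I (r : seq I) (P : pred I) (F : I -> R[i]) :
  complex.Re (\sum_(i <- r | P i) F i) = \sum_(i <- r | P i) complex.Re (F i).
Proof.
have hm : {morph (@complex.Re R) : x y / (x + y)%R >-> (x + y)%R} by move=> [a b] [c d].
elim: r => [|x r IH]; first by rewrite !big_nil.
rewrite !big_cons; case: (P x) => //; by rewrite hm IH.
Qed.

Lemma Re_term (z1 z2 z3 z4 : R[i]) (x : R) :
  complex.Re (((z1 * z2)^*)%C * (x%:C)%C * (z3 * z4)) =
  x * ((complex.Re z1 * complex.Re z2 - complex.Im z1 * complex.Im z2) * (complex.Re z3 * complex.Re z4 - complex.Im z3 * complex.Im z4)
     + (complex.Re z1 * complex.Im z2 + complex.Im z1 * complex.Re z2) * (complex.Re z3 * complex.Im z4 + complex.Im z3 * complex.Re z4)).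
Proof.
case: z1 => a1 b1; case: z2 => a2 b2; case: z3 => a3 b3; case: z4 => a4 b4.
rewrite /=. ring.
Qed.

Lemma tt0 (x y z w v: R) : x*y*z*(w*v) = x*v*z*(w*y). ring. Qed.
Variables m n : nat.
Lemma tt1 (x y z w v: R) : x*y*z*(w*v) = x*v*z*(w*y). ring. Qed.
Local Notation idx := (@mxtens_index m n).
Local Notation Q := (('I_m * 'I_n) * ('I_m * 'I_n))%type.

Lemma tt2 (x y z w v: R) : x*y*z*(w*v) = x*v*z*(w*y). ring. Qed.
Definition T (X : 'M[R]_(m*n)) (a b : 'cV[R]_m) (c d : 'cV[R]_n) : R :=
  \sum_(p : Q) a p.1.1 0 * c p.1.2 0 * X (idx p.1) (idx p.2) * (b p.2.1 0 * d p.2.2 0).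

Lemma valE (X : 'M[R]_(m*n)) (v : 'cV[R]_m) (w : 'cV[R]_n) : ((v *t w)^T *m X *m (v *t w)) 0 0 = T X v v w w.
Proof.
rewrite quad_sum /T; apply: eq_bigr => -[[i k] [j l]] _; by rewrite !kronE.
Qed.

Definition sw (p : Q) : Q := ((p.1.1, p.2.2), (p.2.1, p.1.2)).
Lemma swK : involutive sw. Proof. by case=> [[? ?] [? ?]]. Qed.

Lemma T_ptrans X a b c d : T (ptrans X) a b c d = T X a b d c.
Proof.
rewrite /T (reindex_inj (inv_inj swK)); apply: eq_bigr => -[[i k] [j l]] _ /=.
rewrite mxE !mxtens_indexK /=.
move: (a i 0) (c l 0) (X _ _) (b j 0) (d k 0) => x1 x2 x3 x4 x5. exact: tt2.
Qed.

Lemma T_lin r X Y a b c d : T (r *: (X + Y)) a b c d = r * (T X a b c d + T Y a b c d).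
Proof. rewrite /T -big_split mulr_sumr; apply: eq_bigr => p _; rewrite !mxE /=. ring. Qed.

Definition nrm k (a : 'cV[R]_k) := \sum_i a i 0 ^+ 2.

Lemma nrm_ge0 k (a : 'cV[R]_k) : 0 <= nrm a.
Proof. by apply: sumr_ge0 => i _; apply: sqr_ge0. Qed.

Lemma nrm0 k (a : 'cV[R]_k) : nrm a = 0 -> forall i, a i 0 = 0.
Proof.
move=> h i; have := @psumr_eq0P _ _ predT (fun j => a j 0 ^+ 2) (fun j _ => sqr_ge0 _) h i isT.
by move/eqP; rewrite sqrf_eq0 => /eqP.
Qed.

Lemma T_homog X s t a c :
  T X (s *: a) (s *: a) (t *: c) (t *: c) = s ^+ 2 * t ^+ 2 * T X a a c c.
Proof. rewrite /T mulr_sumr; apply: eq_bigr => p _; rewrite !mxE; ring. Qed.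

Lemma T0l X a c : nrm a = 0 -> T X a a c c = 0.
Proof. move/nrm0 => h; rewrite /T big1 // => p _; rewrite !h; ring. Qed.
Lemma T0r X a c : nrm c = 0 -> T X a a c c = 0.
Proof. move/nrm0 => h; rewrite /T big1 // => p _; rewrite !h; ring. Qed.

Lemma normalize k (a : 'cV[R]_k) : nrm a != 0 ->
  exists s x, [/\ unit_rvec x, a = s *: x & s ^+ 2 = nrm a].
Proof.
move=> h; have hp : 0 < nrm a by rewrite lt_def h nrm_ge0.
set s := Num.sqrt (nrm a).
have hs2 : s ^+ 2 = nrm a by rewrite sqr_sqrtr // nrm_ge0.
have hs : s != 0 by rewrite sqrtr_eq0 -ltNge.
exists s, (s^-1 *: a); split => //.
- rewrite /unit_rvec; under eq_bigr do rewrite mxE exprMn.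
  by rewrite -mulr_sumr -/(nrm a) -hs2 exprVn mulVf // expf_neq0.
- by rewrite scalerA divff // scale1r.
Qed.

Lemma T_lb X mu : (forall x y, unit_rvec x -> unit_rvec y -> mu <= T X x x y y) ->
  forall a c, mu * (nrm a * nrm c) <= T X a a c c.
Proof.
move=> H a c; have [ha|ha] := eqVneq (nrm a) 0.
  by rewrite T0l // ha mul0r mulr0.
have [hc|hc] := eqVneq (nrm c) 0.
  by rewrite T0r // hc mulr0 mulr0.
have [s [x [ux -> <-]]] := normalize ha.
have [t [y [uy -> <-]]] := normalize hc.
rewrite T_homog mulrC; apply: ler_wpM2l; [by rewrite mulr_ge0 ?sqr_ge0 | exact: H].
Qed.

Lemma T_ub X mu : (forall x y, unit_rvec x -> unit_rvec y -> T X x x y y <= mu) ->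
  forall a c, T X a a c c <= mu * (nrm a * nrm c).
Proof.
move=> H a c; have [ha|ha] := eqVneq (nrm a) 0.
  by rewrite T0l // ha mul0r mulr0.
have [hc|hc] := eqVneq (nrm c) 0.
  by rewrite T0r // hc mulr0 mulr0.
have [s [x [ux -> <-]]] := normalize ha.
have [t [y [uy -> <-]]] := normalize hc.
rewrite T_homog [leRHS]mulrC; apply: ler_wpM2l; [by rewrite mulr_ge0 ?sqr_ge0 | exact: H].
Qed.


Definition cval (X : 'M[R]_(m*n)) (v : 'cV[R[i]]_m) (w : 'cV[R[i]]_n) : R[i] :=
  ((map_mx Num.conj (v *t w))^T *m map_mx (fun x : R => (x%:C)%C) X *m (v *t w)) 0 0.

Lemma cval_Re X v w :
  complex.Re (cval X v w) =
   T X (map_mx (@complex.Re R) v) (map_mx (@complex.Re R) v) (map_mx (@complex.Re R) w) (map_mx (@complex.Re R) w)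
 - T X (map_mx (@complex.Re R) v) (map_mx (@complex.Im R) v) (map_mx (@complex.Re R) w) (map_mx (@complex.Im R) w)
 - T X (map_mx (@complex.Im R) v) (map_mx (@complex.Re R) v) (map_mx (@complex.Im R) w) (map_mx (@complex.Re R) w)
 + T X (map_mx (@complex.Im R) v) (map_mx (@complex.Im R) v) (map_mx (@complex.Im R) w) (map_mx (@complex.Im R) w)
 + T X (map_mx (@complex.Re R) v) (map_mx (@complex.Re R) v) (map_mx (@complex.Im R) w) (map_mx (@complex.Im R) w)
 + T X (map_mx (@complex.Re R) v) (map_mx (@complex.Im R) v) (map_mx (@complex.Im R) w) (map_mx (@complex.Re R) w)
 + T X (map_mx (@complex.Im R) v) (map_mx (@complex.Re R) v) (map_mx (@complex.Re R) w) (map_mx (@complex.Im R) w)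
 + T X (map_mx (@complex.Im R) v) (map_mx (@complex.Im R) v) (map_mx (@complex.Re R) w) (map_mx (@complex.Re R) w).
Proof.
rewrite /cval quad_sum Re_sum /T -!sumrN -!big_split /=; apply: eq_bigr => p _.
rewrite !mxE !mxtens_indexK ![(@mxtens_unindex _ _ _).1]ord1 ![(@mxtens_unindex _ _ _).2]ord1 conjE Re_term.
move: (X _ _) (complex.Re (v p.1.1 0)) (complex.Im (v p.1.1 0)) (complex.Re (v p.2.1 0)) (complex.Im (v p.2.1 0)) (complex.Re (w p.1.2 0)) (complex.Im (w p.1.2 0)) (complex.Re (w p.2.2 0)) (complex.Im (w p.2.2 0)) => *; ring.
Qed.

Lemma cunit_nrm k (v : 'cV[R[i]]_k) :
  unit_cvec v -> nrm (map_mx (@complex.Re R) v) + nrm (map_mx (@complex.Im R) v) = 1.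
Proof.
rewrite /unit_cvec /nrm -big_split /= => h.
have e : \sum_i `|v i 0| ^+ 2 = ((\sum_i (complex.Re (v i 0) ^+ 2 + complex.Im (v i 0) ^+ 2))%:C)%C.
  by rewrite rmorph_sum; apply: eq_bigr => j _; rewrite -add_Re2_Im2.
rewrite e in h; have := congr1 (@complex.Re R) h => /= <-.
by apply: eq_bigr => j _; rewrite !mxE.
Qed.

Lemma cval_real X (v : 'cV[R]_m) (w : 'cV[R]_n) :
  cval X (map_mx (fun x : R => (x%:C)%C) v) (map_mx (fun x : R => (x%:C)%C) w)
  = ((T X v v w w)%:C)%C.
Proof.
rewrite /cval quad_sum /T rmorph_sum; apply: eq_bigr => p _.
rewrite !mxE !mxtens_indexK ![(@mxtens_unindex _ _ _).1]ord1 ![(@mxtens_unindex _ _ _).2]ord1 ?mxE.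
by rewrite conjE -rmorphM conjc_real -!rmorphM.
Qed.

Lemma unit_emb k (v : 'cV[R]_k) : unit_rvec v -> unit_cvec (map_mx (fun x : R => (x%:C)%C) v).
Proof.
rewrite /unit_cvec /unit_rvec => h.
have e : \sum_i `|map_mx (fun x : R => (x%:C)%C) v i 0| ^+ 2 = ((\sum_i (v i 0 ^+ 2))%:C)%C.
  rewrite rmorph_sum; apply: eq_bigr => j _; rewrite mxE -add_Re2_Im2 /=.
  by rewrite !expr2 mul0r addr0.
by rewrite e h.
Qed.

Lemma unit_exists k : (exists v : 'cV[R[i]]_k, unit_cvec v) -> exists v : 'cV[R]_k, unit_rvec v.
Proof.
case: k => [|k] [v hv].
  by move: hv; rewrite /unit_cvec big_ord0 => /eqP; rewrite eq_sym oner_eq0.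
exists (\col_j (j == ord0)%:R).
rewrite /unit_rvec (bigD1 ord0) //= !mxE eqxx expr1n big1 ?addr0 // => j /negbTE hj.
by rewrite mxE hj mulr0n expr2 mulr0.
Qed.

Lemma unit_le1 k (x : 'cV[R]_k) : unit_rvec x -> forall i, `|x i 0| <= 1.
Proof.
move=> h i; have : x i 0 ^+ 2 <= 1.
  rewrite -h (bigD1 i) //= lerDl; apply: sumr_ge0 => j _; exact: sqr_ge0.
rewrite -real_normK ?num_real // => hh; have := normr_ge0 (x i 0).
move: (`|x i 0|) hh => t; nra.
Qed.

Definition Mb (X : 'M[R]_(m*n)) := \sum_(p : Q) `|X (idx p.1) (idx p.2)|.

Lemma T_bound X x y : unit_rvec x -> unit_rvec y -> `|T X x x y y| <= Mb X.
Proof.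
move=> hx hy; rewrite /T; apply: le_trans (ler_norm_sum _ _ _) _.
apply: ler_sum => p _; rewrite !normrM.
have h1 := unit_le1 hx; have h2 := unit_le1 hy.
apply: (@le_trans _ _ (1 * 1 * `|X (idx p.1) (idx p.2)| * (1 * 1))); last by rewrite !mul1r mulr1.
apply: ler_pM; rewrite ?mulr_ge0 //.
  apply: ler_pM; rewrite ?mulr_ge0 //; exact: ler_pM.
exact: ler_pM.
Qed.

End Main.

Lemma inf_eq (R : realType) (P S : set R) : (P `<=` S)%classic -> (P !=set0)%classic -> has_lbound P ->
  (forall q, S q -> inf P <= q) -> inf S = inf P.
Proof.
move=> hPS hne hlb hq; apply/eqP; rewrite eq_le; apply/andP; split.
  apply: lb_le_inf => // p hp; apply: ge_inf; last exact: hPS.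
  by exists (inf P).
have [p hp] := hne.
by apply: lb_le_inf => //; exists p; exact: hPS.
Qed.

Lemma sup_eq (R : realType) (P S : set R) : (P `<=` S)%classic -> (P !=set0)%classic -> has_ubound P ->
  (forall q, S q -> q <= sup P) -> sup S = sup P.
Proof.
move=> hPS hne hub hq; apply/eqP; rewrite eq_le; apply/andP; split.
  have [p hp] := hne.
  by apply: ge_sup => //; exists p; exact: hPS.
apply: ge_sup => // p hp; apply: ub_le_sup; last exact: hPS.
by exists (sup P).
Qed.

Theorem lemma5p1 (R : realType) (m n : nat) (B : 'M[R]_(m * n)) :
  B^T = B ->
  let X := 2^-1 *: (B + ptrans B) in
  (mu_min B = mu_min X /\ mu_min X = cmu_min X) /\
  (mu_max B = mu_max X /\ mu_max X = cmu_max X).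
Proof.
move=> _ X.
have hsym : forall a b c d, T X a b c d = T X a b d c.
  by move=> a b c d; rewrite /X !T_lin !T_ptrans addrC.
have hXB : forall v w, T X v v w w = T B v v w w.
  move=> v w; rewrite /X T_lin T_ptrans; move: (T B v v w w) => t.
  by field.
have ePB : prod_vals B = prod_vals X.
  by apply/seteqP; split => q [v [w [hv [hw <-]]]]; exists v, w; rewrite !valE hXB.
have hPS : (prod_vals X `<=` cprod_vals X)%classic.
  move=> q [v [w [hv [hw <-]]]].
  exists (map_mx (fun x : R => (x%:C)%C) v), (map_mx (fun x : R => (x%:C)%C) w).
  split; first exact: unit_emb.
  split; first exact: unit_emb.
  by rewrite valE; exact: cval_real.
have hdec : forall q, cprod_vals X q -> exists a b c d,
    [/\ q = T X a a c c + T X b b d d + T X a a d d + T X b b c c,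
        nrm a + nrm b = 1 & nrm c + nrm d = 1].
  move=> q [v [w [hv [hw hq]]]].
  exists (map_mx (@complex.Re R) v), (map_mx (@complex.Im R) v),
    (map_mx (@complex.Re R) w), (map_mx (@complex.Im R) w).
  split; [|exact: cunit_nrm|exact: cunit_nrm].
  have e := cval_Re X v w; rewrite /cval hq /= in e.
  rewrite e; set a := map_mx _ v; set b := map_mx _ v; set c := map_mx _ w; set d := map_mx _ w.
  rewrite [T X a b d c]hsym [T X b a c d]hsym.
  move: (T X a a c c) (T X a b c d) (T X b a d c) (T X b b d d) (T X a a d d) (T X b b c c) => t1 t2 t3 t4 t5 t6; ring.
have hbnd : forall q, prod_vals X q -> `|q| <= Mb X.
  by move=> q [v [w [hv [hw <-]]]]; rewrite valE; exact: T_bound.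
have [hne|hne] := pselect (prod_vals X !=set0)%classic; last first.
  have eS : cprod_vals X = prod_vals X.
    apply/seteqP; split => q hq; exfalso; apply: hne; last by exists q.
    case: hq => v [w [hv [hw _]]].
    have [x hx] := unit_exists (ex_intro _ v hv).
    have [y hy] := unit_exists (ex_intro _ w hw).
    by exists (T X x x y y), x, y; rewrite valE.
  by rewrite /mu_min /mu_max /cmu_min /cmu_max eS ePB.
have hlb : has_lbound (prod_vals X).
  by exists (- Mb X) => q hq; have := hbnd q hq; rewrite ler_norml => /andP[].
have hub : has_ubound (prod_vals X).
  by exists (Mb X) => q hq; have := hbnd q hq; rewrite ler_norml => /andP[].
split; split; rewrite /mu_min /mu_max /cmu_min /cmu_max ?ePB //.
- symmetry; apply: inf_eq => // q /hdec [a [b [c [d [-> hab hcd]]]]].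
  have hT : forall x y, unit_rvec x -> unit_rvec y -> inf (prod_vals X) <= T X x x y y.
    by move=> x y hx hy; apply: ge_inf => //; exists x, y; rewrite valE.
  have h1 := T_lb hT a c; have h2 := T_lb hT b d; have h3 := T_lb hT a d; have h4 := T_lb hT b c.
  have e : nrm a * nrm c + nrm b * nrm d + nrm a * nrm d + nrm b * nrm c = 1.
    by rewrite -[1]mulr1 -[X in _ = X * _]hab -hcd; ring.
  rewrite -[inf (prod_vals X)]mulr1 -e !mulrDr.
  by apply: lerD; [apply: lerD; [apply: lerD|]|].
- symmetry; apply: sup_eq => // q /hdec [a [b [c [d [-> hab hcd]]]]].
  have hT : forall x y, unit_rvec x -> unit_rvec y -> T X x x y y <= sup (prod_vals X).
    by move=> x y hx hy; apply: ub_le_sup => //; exists x, y; rewrite valE.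
  have h1 := T_ub hT a c; have h2 := T_ub hT b d; have h3 := T_ub hT a d; have h4 := T_ub hT b c.
  have e : nrm a * nrm c + nrm b * nrm d + nrm a * nrm d + nrm b * nrm c = 1.
    by rewrite -[1]mulr1 -[X in _ = X * _]hab -hcd; ring.
  rewrite -[sup (prod_vals X)]mulr1 -e !mulrDr.
  by apply: lerD; [apply: lerD; [apply: lerD|]|].
Qed.
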